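(* For every $n\ge1$ there are bijections $\varphi:\mathfrak{S}_n(213)\to\mathfrak{S}_n(312)$ and $\eta:\mathfrak{S}_n(132)\to\mathfrak{S}_n(231)$ preserving the descent set $\{i\in[n-1]:\pi_i>\pi_{i+1}\}$. Consequently $|\mathcal{B}_n(213)|=|\mathcal{B}_n(312)|$ and $|\mathcal{B}_n(132)|=|\mathcal{B}_n(231)|$ for all $n\ge1$.
   Context: $\mathfrak{S}_n(\sigma)$ is the set of permutations in $\mathfrak{S}_n$ with no subsequence order-isomorphic to the pattern $\sigma$. A ballot permutation is a $\pi\in\mathfrak{S}_n$ such that every prefix $\pi_1\cdots\pi_i$ has at most as many descents ($\pi_j>\pi_{j+1}$) as ascents ($\pi_j<\pi_{j+1}$); $\mathcal{B}_n(\sigma)$ is the set of $\sigma$-avoiding ballot permutations in $\mathfrak{S}_n$. *)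

(* Defs.v *)
From mathcomp Require Import all_boot all_fingroup.
Set Implicit Arguments. Unset Strict Implicit. Unset Printing Implicit Defensive.

(* Permutations of [n] are 'S_n = {perm 'I_n}; positions and values are 0-based. *)
(* one-line value of pi at position j (as a nat), 0 past the end *)
Definition pval n (pi : 'S_n) (j : nat) : nat :=
  if insub j is Some i then val (pi i) else 0.

(* A pattern is given in one-line notation as a sequence of distinct naturals,
   e.g. [:: 2; 1; 3] for 213.  pi contains the pattern p iff there are positions
   f 0 < f 1 < ... < f (k-1) whose values are order-isomorphic to p. *)
Definition contains n (pi : 'S_n) (p : seq nat) : bool :=
  [exists f : {ffun 'I_(size p) -> 'I_n},
    [forall a : 'I_(size p), forall b : 'I_(size p),
       ((a < b) ==> (f a < f b)) &&
       ((pi (f a) < pi (f b)) == (nth 0 p a < nth 0 p b))]].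

Definition avoids n (pi : 'S_n) (p : seq nat) : bool := ~~ contains pi p.

(* descent set {i in [n-1] : pi_i > pi_{i+1}}, with 1-based i, stored as nat set *)
Definition descent_set n (pi : 'S_n) : seq nat :=
  [seq i <- iota 1 n.-1 | pval pi i.-1 > pval pi i].

Definition des_prefix n (pi : 'S_n) (m : nat) : nat :=
  count (fun j => pval pi j > pval pi j.+1) (iota 0 m.-1).
Definition asc_prefix n (pi : 'S_n) (m : nat) : nat :=
  count (fun j => pval pi j < pval pi j.+1) (iota 0 m.-1).

Definition ballot n (pi : 'S_n) : bool :=
  [forall m : 'I_n.+1, (1 <= m) ==> (des_prefix pi m <= asc_prefix pi m)].

Definition Av n (p : seq nat) : {set 'S_n} := [set pi : 'S_n | avoids pi p].
Definition Bal n (p : seq nat) : {set 'S_n} := [set pi in Av n p | ballot pi].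

Definition bij_between n (phi : 'S_n -> 'S_n) (A B : {set 'S_n}) : Prop :=
  [/\ {in A, forall pi, phi pi \in B}, {in A &, injective phi}
    & {in B, forall tau, exists2 pi, pi \in A & phi pi = tau}].

(* Main.v *)
Require Import Defs.
From mathcomp Require Import all_boot all_fingroup.
From mathcomp Require Import zify.
From Stdlib Require Import ClassicalEpsilon.
Set Implicit Arguments. Unset Strict Implicit. Unset Printing Implicit Defensive.


Definition pat (s : seq nat) (q : nat -> nat -> nat -> bool) : Prop :=
  exists i j k, [/\ i < j, j < k, k < size s & q (nth 0 s i) (nth 0 s j) (nth 0 s k)].

Lemma nthA a m b i : i < size a -> nth 0 (a ++ m :: b) i = nth 0 a i.
Proof. by move=> h; rewrite nth_cat h. Qed.
Lemma nthM a m b : nth 0 (a ++ m :: b) (size a) = m.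
Proof. by rewrite nth_cat ltnn subnn. Qed.
Lemma nthB a m b i : nth 0 (a ++ m :: b) (size a + i).+1 = nth 0 b i.
Proof. rewrite nth_cat ifN; last by lia. by have -> : (size a + i).+1 - size a = i.+1 by lia. Qed.

Lemma pat_catl (s t : seq nat) q : pat s q -> pat (s ++ t) q.
Proof.
case=> i [j [k [h1 h2 h3 h4]]]; exists i, j, k; rewrite size_cat !nth_cat.
rewrite h3 (ltn_trans h2 h3) (ltn_trans h1 (ltn_trans h2 h3)); split=> //; lia.
Qed.

Lemma pat_catr (s t : seq nat) q : pat t q -> pat (s ++ t) q.
Proof.
case=> i [j [k [h1 h2 h3 h4]]]; exists (size s + i), (size s + j), (size s + k).
rewrite size_cat !nth_cat !ltnNge !leq_addr /= !addKn; split=> //; lia.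
Qed.

Lemma pat_map c s q : (forall x y z, q (c + x) (c + y) (c + z) = q x y z) ->
  pat (map (addn c) s) q <-> pat s q.
Proof.
move=> hq; split; case=> i [j [k [h1 h2 h3 h4]]]; exists i, j, k;
  rewrite ?size_map in h3 *; split=> //.
  by rewrite !(nth_map 0) ?hq // in h4; lia.
by rewrite !(nth_map 0) ?hq //; lia.
Qed.

Lemma pat_cross (a : seq nat) (m : nat) (b : seq nat) (q : nat -> nat -> nat -> bool) (x y : nat) : x \in a -> y \in b -> q x m y -> pat (a ++ m :: b) q.
Proof.
move=> xa yb hq; exists (index x a), (size a), (size a + index y b).+1.
have ia : index x a < size a by rewrite index_mem.
have ib : index y b < size b by rewrite index_mem.
rewrite nthA // nthM nthB !nth_index //; split=> //.
- by lia.
- by rewrite size_cat /=; lia.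

Qed.

Lemma pat_split (a : seq nat) (m : nat) (b : seq nat) (q : nat -> nat -> nat -> bool) : pat (a ++ m :: b) q -> pat a q \/ pat b q \/
  exists x y z, q x y z /\
  ([/\ x \in a, y \in a & z = m] \/ [/\ x \in a, y \in a & z \in b] \/
      [/\ x \in a, y = m & z \in b] \/ [/\ x \in a, y \in b & z \in b]
    \/ [/\ x = m, y \in b & z \in b]).
Proof.
case=> i [j [k [h1 h2 h3 h4]]]; rewrite size_cat /= in h3.
have EB : forall u, size a < u -> u < size a + (size b).+1 ->
  nth 0 (a ++ m :: b) u = nth 0 b (u - (size a).+1) /\ nth 0 b (u - (size a).+1) \in b.
  move=> u hu hu'; have -> : u = (size a + (u - (size a).+1)).+1 by lia.
  rewrite nthB; split; first by congr nth; lia.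
  apply: mem_nth. set sa := size a in hu hu' *. set sb := size b in hu' *. lia.
have EA : forall u, u < size a -> nth 0 (a ++ m :: b) u = nth 0 a u /\ nth 0 a u \in a.
  by move=> u hu; rewrite nthA //; split=> //; apply: mem_nth.
have [ia|ia|ia] := ltngtP i (size a).
- have [xA xa] := EA _ ia; rewrite xA in h4.
  have [ja|ja|ja] := ltngtP j (size a).
  + have [yA ya] := EA _ ja; rewrite yA in h4.
    have [ka|ka|ka] := ltngtP k (size a).
    * have [zA za] := EA _ ka; rewrite zA in h4.
      by left; exists i, j, k; split.
    * have [zB zb] := EB _ ka h3; rewrite zB in h4.
      by right; right; do 3 eexists; split; first exact: h4; (right; left; split).
    * rewrite ka nthM in h4.
      by right; right; do 3 eexists; split; first exact: h4; (left; split).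
  + have [yB yb] := EB _ ja (ltn_trans h2 h3); rewrite yB in h4.
    have [zB zb] := EB _ (ltn_trans ja h2) h3; rewrite zB in h4.
    by right; right; do 3 eexists; split; first exact: h4; (do 3 right; left; split).
  + rewrite ja nthM in h4.
    have [zB zb] := EB _ ((eq_ind_r (fun u => u < k) h2 (esym ja))) h3; rewrite zB in h4.
    by right; right; do 3 eexists; split; first exact: h4; (do 2 right; left; split).
- have [xB xb] := EB _ ia (ltn_trans h1 (ltn_trans h2 h3)).
  have [yB yb] := EB _ (ltn_trans ia h1) (ltn_trans h2 h3).
  have [zB zb] := EB _ (ltn_trans (ltn_trans ia h1) h2) h3.
  rewrite xB yB zB in h4.
  right; left; exists (i - (size a).+1), (j - (size a).+1), (k - (size a).+1).
  split=> //; lia.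
- rewrite ia nthM in h4.
  have [yB yb] := EB _ ((eq_ind_r (fun u => u < j) h1 (esym ia))) (ltn_trans h2 h3).
  have [zB zb] := EB _ (ltn_trans ((eq_ind_r (fun u => u < j) h1 (esym ia))) h2) h3.
  rewrite yB zB in h4.
  by right; right; do 3 eexists; split; first exact: h4; (do 4 right; split).
Qed.

Definition dl (s : seq nat) : seq bool :=
  if s is x :: s' then pairmap (fun u v => v < u) x s' else [::].

Lemma dl_map c s : dl (map (addn c) s) = dl s.
Proof.
case: s => //= x s; elim: s x => //= y s IH x.
by rewrite ltn_add2l IH.
Qed.

Lemma dl_cat (a : seq nat) m b : dl (a ++ m :: b) =
  (if a is x :: a' then dl a ++ [:: m < last x a'] else [::]) ++
  (if b is y :: b' then (y < m) :: dl b else [::]).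
Proof.
case: a => [|x a] /=.
  by case: b.
rewrite pairmap_cat /= -catA; congr (_ ++ _); case: b => //.
Qed.

Lemma dl_root (rm : bool) (a : seq nat) m b :
  (forall x, x \in a -> if rm then m < x else x < m) ->
  (forall y, y \in b -> if rm then m < y else y < m) ->
  dl (a ++ m :: b) = (if size a is 0 then [::] else dl a ++ [:: rm]) ++
    (if size b is 0 then [::] else ~~ rm :: dl b).
Proof.
move=> ha hb; rewrite dl_cat; congr (_ ++ _).
  case: a ha => //= x a ha; congr (_ ++ [:: _]).
  have h := ha (last x a) (mem_last x a); by destruct rm; lia.
case: b hb => //= y b hb; congr (_ :: _).
have h := hb y (mem_head y b); by destruct rm; lia.
Qed.

Lemma dl_nth s i : i.+1 < size s -> nth false (dl s) i = (nth 0 s i.+1 < nth 0 s i).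
Proof.
case: s => //= x s hi; rewrite (nth_pairmap 0) //.
Qed.

Lemma perm_sub (s : seq nat) a k : uniq s -> {subset s <= iota a k} -> k <= size s -> perm_eq s (iota a k).
Proof.
move=> us sub hk; apply: uniq_perm => //; first exact: iota_uniq.
by have [] := uniq_min_size us sub; rewrite size_iota.
Qed.

Inductive tree := Lf | Nd of tree & tree.
Fixpoint sz t := if t is Nd l r then (sz l + sz r).+1 else 0.
Definition shl (rm ll : bool) (nl nr : nat) := (if rm then 1 else 0) + (if ll then 0 else nr).
Definition shr (rm ll : bool) (nl nr : nat) := (if rm then 1 else 0) + (if ll then nl else 0).
Definition rt (rm : bool) (nl nr : nat) := if rm then 0 else nl + nr.
Fixpoint gen rm ll t : seq nat :=
  if t is Nd l r then
    map (addn (shl rm ll (sz l) (sz r))) (gen rm ll l) ++ rt rm (sz l) (sz r)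
      :: map (addn (shr rm ll (sz l) (sz r))) (gen rm ll r)
  else [::].

Definition qof (rm ll : bool) : nat -> nat -> nat -> bool := fun x y z =>
  match rm, ll with
  | true, false => (y < x) && (x < z)
  | true, true => (y < z) && (z < x)
  | false, false => (x < z) && (z < y)
  | false, true => (z < x) && (x < y)
  end.

Lemma qof_add rm ll c x y z : qof rm ll (c + x) (c + y) (c + z) = qof rm ll x y z.
Proof. by case: rm; case: ll; rewrite /= !ltn_add2l. Qed.

Lemma size_gen rm ll t : size (gen rm ll t) = sz t.
Proof. by elim: t => //= l IHl r IHr; rewrite size_cat /= !size_map IHl IHr addnS. Qed.

Lemma mem_mapb c (L : seq nat) n x : (forall y, y \in L -> y < n) ->
  x \in map (addn c) L -> c <= x < c + n.
Proof. by move=> h /mapP [y /h hy ->]; lia. Qed.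

Lemma gen_range rm ll t x : x \in gen rm ll t -> x < sz t.
Proof.
elim: t x => //= l IHl r IHr x; rewrite mem_cat inE => /orP [/(mem_mapb IHl)|/orP[/eqP->|/(mem_mapb IHr)]];
  rewrite /shl /shr /rt; destruct rm, ll; lia.
Qed.

Lemma uniq_sep (a b : seq nat) m : uniq a -> uniq b -> m \notin a -> m \notin b ->
  (forall x y, x \in a -> y \in b -> x != y) -> uniq (a ++ m :: b).
Proof.
move=> ua ub ma mb ab; rewrite cat_uniq ua /= mb ub andbT.
rewrite (negPf ma) /= andbT; apply/hasPn => y yb; apply/negP => ya.
by have := ab _ _ ya yb; rewrite eqxx.
Qed.

Lemma gen_uniq rm ll t : uniq (gen rm ll t).
Proof.
elim: t => //= l IHl r IHr; apply: uniq_sep.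
- by rewrite map_inj_uniq //; apply: addnI.
- by rewrite map_inj_uniq //; apply: addnI.
- apply/negP => /(mem_mapb (@gen_range rm ll l)); rewrite /shl /rt; destruct rm, ll; lia.
- apply/negP => /(mem_mapb (@gen_range rm ll r)); rewrite /shr /rt; destruct rm, ll; lia.
- move=> x y /(mem_mapb (@gen_range rm ll l)) hx /(mem_mapb (@gen_range rm ll r)) hy.
  apply/eqP; move: hx hy; rewrite /shl /shr; destruct rm, ll; lia.
Qed.

Lemma gen_perm rm ll t : perm_eq (gen rm ll t) (iota 0 (sz t)).
Proof.
apply: perm_sub; rewrite ?gen_uniq ?size_gen //.
by move=> x /gen_range hx; rewrite mem_iota.
Qed.

Lemma gen_avoid rm ll t : ~ pat (gen rm ll t) (qof rm ll).
Proof.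
elim: t => /= [|l IHl r IHr].
  by case=> i [j [k [_ _ ]]].
move/pat_split => [/pat_map H|[/pat_map H|[x [y [z [hq H]]]]]].
- by apply: IHl; apply/H => *; apply: qof_add.
- by apply: IHr; apply/H => *; apply: qof_add.
have ML := mem_mapb (@gen_range rm ll l); have MR := mem_mapb (@gen_range rm ll r).
move: hq; case: H => [[/ML hx /ML hy ->]|[[/ML hx /ML hy /MR hz]|[[/ML hx -> /MR hz]|
  [[/ML hx /MR hy /MR hz]|[-> /MR hy /MR hz]]]]];
  unfold shl, shr, rt in *; destruct rm, ll; simpl in *; lia.
Qed.

Fixpoint dlT (rm : bool) t : seq bool :=
  if t is Nd l r then
    (if sz l is 0 then [::] else dlT rm l ++ [:: rm]) ++
    (if sz r is 0 then [::] else ~~ rm :: dlT rm r)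
  else [::].

Lemma dl_gen rm ll t : dl (gen rm ll t) = dlT rm t.
Proof.
elim: t => //= l IHl r IHr.
rewrite (@dl_root rm) ?size_map ?size_gen ?dl_map ?IHl ?IHr //.
- move=> x /(mem_mapb (@gen_range rm ll l)); unfold shl, rt; destruct rm, ll; lia.
- move=> x /(mem_mapb (@gen_range rm ll r)); unfold shr, rt; destruct rm, ll; lia.
Qed.

Lemma cat_inj (a b a' b' : seq nat) m : m \notin a -> m \notin a' ->
  a ++ m :: b = a' ++ m :: b' -> a = a' /\ b = b'.
Proof.
move=> ma ma' E.
have I : size a = size a'.
  have := congr1 (index m) E; rewrite !index_cat (negPf ma) (negPf ma') /= eqxx.
  by rewrite !addn0.
have := congr1 (take (size a)) E; rewrite {2}I !take_size_cat // => ->; split=> //.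
have := congr1 (drop (size a).+1) E; rewrite {2}I.
by rewrite -!cat_rcons !drop_size_cat // size_rcons ?I.
Qed.

Lemma gen_inj rm ll : injective (gen rm ll).
Proof.
elim=> [|l IHl r IHr] [|l' r'] //=.
- by move/(congr1 size); rewrite size_cat /= addnS.
- by move/(congr1 size); rewrite size_cat /= addnS.
move=> E.
have S := congr1 size E; rewrite !size_cat /= !size_map !size_gen in S.
have NM : forall t1 t2 c, c = shl rm ll (sz t1) (sz t2) ->
    rt rm (sz t1) (sz t2) \notin map (addn c) (gen rm ll t1).
  move=> t1 t2 c -> ; apply/negP => /(mem_mapb (@gen_range rm ll t1)).
  unfold shl, rt; destruct rm, ll; lia.
have R : rt rm (sz l') (sz r') = rt rm (sz l) (sz r).
  unfold rt; destruct rm => //; lia.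
move: E; rewrite R => /cat_inj [].
- exact: NM.
- by rewrite -R; apply: NM.
move=> E1 E2.
have L : sz l = sz l'.
  by have := congr1 size E1; rewrite !size_map !size_gen.
have Rr : sz r = sz r' by lia.
move: E1 E2; rewrite L Rr => /(inj_map (@addnI _)) /IHl -> /(inj_map (@addnI _)) /IHr -> //.
Qed.

Lemma uniq_parts (a b : seq nat) m : uniq (a ++ m :: b) ->
  [/\ uniq a, uniq b, m \notin a, m \notin b & forall x y, x \in a -> y \in b -> x != y].
Proof.
rewrite cat_uniq /= => /and3P [ua /norP [ma /hasPn hab] /andP [mb ub]]; split=> //.
move=> x y xa yb; apply/eqP => E; subst y.
by have := hab x yb; rewrite xa.
Qed.

Lemma split_bounds (u v : seq nat) c : uniq (u ++ v) ->
  (forall x, x \in u ++ v -> c <= x < c + size u + size v) ->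
  (forall x y, x \in u -> y \in v -> x < y) ->
  (forall x, x \in u -> c <= x < c + size u) /\
  (forall y, y \in v -> c + size u <= y < c + size u + size v).
Proof.
rewrite cat_uniq => /and3P [uu _ uv] hb hlt; split.
- move=> x xu; have := hb x; rewrite mem_cat xu => /(_ isT) h1.
  have : size v <= size (iota x.+1 (c + size u + size v - x.+1)).
    apply: uniq_leq_size => // y yv; rewrite mem_iota.
    have := hb y; rewrite mem_cat yv orbT => /(_ isT).
    have := hlt x y xu yv; lia.
  rewrite size_iota; lia.
- move=> y yv; have := hb y; rewrite mem_cat yv orbT => /(_ isT) h1.
  have : size u <= size (iota c (y - c)).
    apply: uniq_leq_size => // x xu; rewrite mem_iota.
    have := hb x; rewrite mem_cat xu => /(_ isT).
    have := hlt x y xu yv; lia.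
  rewrite size_iota; lia.
Qed.

Lemma std_ex (a : seq nat) c : uniq a -> (forall x, x \in a -> c <= x < c + size a) ->
  exists a', a = map (addn c) a' /\ perm_eq a' (iota 0 (size a')).
Proof.
move=> ua hb; exists (map (subn^~ c) a).
have E : a = map (addn c) (map (subn^~ c) a).
  rewrite -map_comp map_id_in // => x /hb /= h; lia.
split=> //; apply: perm_sub.
- by move: ua; rewrite {1}E map_inj_uniq //; apply: addnI.
- move=> y /mapP [x /hb hx ->]; rewrite mem_iota size_map; lia.
- by rewrite size_map.
Qed.

Lemma cross_arith rm ll x y N : x != y -> x != (if rm then 0 else N.-1) ->
  y != (if rm then 0 else N.-1) -> x < N -> y < N -> ~~ (if ll then x < y else y < x) ->
  qof rm ll x (if rm then 0 else N.-1) y.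
Proof. destruct rm, ll => /=; lia. Qed.
Lemma bab_arith (rm : bool) x N : x != (if rm then 0 else N.-1) -> x < N ->
  (if rm then 1 else 0) <= x < (if rm then 1 else 0) + N.-1.
Proof. destruct rm; lia. Qed.
Lemma ar1 A B N n : N = A + B + 1 -> N < n.+1 -> A < n.
Proof. lia. Qed.
Lemma ar2 A B N n : N = A + B + 1 -> N < n.+1 -> B < n.
Proof. lia. Qed.

Lemma gen_ex rm ll n : forall s : seq nat, size s < n -> perm_eq s (iota 0 (size s)) ->
  ~ pat s (qof rm ll) -> exists t, gen rm ll t = s.
Proof.
elim: n => // n IH s hn hp hav.
have [->|ne] := eqVneq s [::]; first by exists Lf.
have us : uniq s by rewrite (perm_uniq hp) iota_uniq.
have rs : forall x, x \in s -> x < size s.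
  by move=> x; rewrite (perm_mem hp) mem_iota.
have N0 : 0 < size s by case: s ne {hn hp hav us rs}.
set m := if rm then 0 else (size s).-1.
have ms : m \in s by rewrite (perm_mem hp) mem_iota /m; destruct rm; lia.
set a := take (index m s) s; set b := drop (index m s).+1 s.
have Hs : s = a ++ m :: b.
  by rewrite /a /b -{1}(cat_take_drop (index m s) s) (drop_nth 0) ?index_mem // nth_index.
have Sz : size s = size a + size b + 1 by rewrite {1}Hs size_cat /= addn1 addnS.
have SS : size a + size b = (size s).-1 by rewrite Sz addn1.
have us' : uniq (a ++ m :: b) by rewrite -Hs.
have [ua ub ma mb dab] := uniq_parts us'.
have ra : forall x, x \in a -> x < size s by move=> x xa; apply: rs; rewrite Hs mem_cat xa.
have rb : forall x, x \in b -> x < size s.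
  by move=> x xb; apply: rs; rewrite Hs mem_cat inE xb !orbT.
have cross : forall x y, x \in a -> y \in b -> if ll then x < y else y < x.
  move=> x y xa yb; apply/negPn/negP => H; apply: hav; rewrite Hs.
  apply: (pat_cross xa yb).
  have xm : x != m by apply: contraNneq ma => <-.
  have ym : y != m by apply: contraNneq mb => <-.
  exact: (cross_arith (dab _ _ xa yb) xm ym (ra _ xa) (rb _ yb) H).
have uab : uniq (a ++ b).
  apply: subseq_uniq us'; apply: cat_subseq => //; exact: subseq_cons.
pose c := if rm then 1 else 0.
have bab : forall x, x \in a ++ b -> c <= x < c + size a + size b.
  move=> x; rewrite -addnA SS mem_cat => /orP [xa|xb].
    have xm : x != m by apply: contraNneq ma => <-.
    exact: (bab_arith xm (ra _ xa)).
  have xm : x != m by apply: contraNneq mb => <-.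
  exact: (bab_arith xm (rb _ xb)).
have [ha hb] : (forall x, x \in a -> shl rm ll (size a) (size b) <= x <
                  shl rm ll (size a) (size b) + size a) /\
               (forall y, y \in b -> shr rm ll (size a) (size b) <= y <
                  shr rm ll (size a) (size b) + size b).
  destruct ll.
    have [h1 h2] := split_bounds uab bab cross.
    by rewrite /shl /shr /= addn0; split; [exact: h1|exact: h2].
  have H1 : uniq (b ++ a) by rewrite uniq_catC.
  have H2 : forall x, x \in b ++ a -> c <= x < c + size b + size a.
    by move=> x; rewrite mem_cat orbC -mem_cat addnAC; apply: bab.
  have H3 : forall x y, x \in b -> y \in a -> x < y by move=> x y xb ya; apply: cross.
  have [h1 h2] := split_bounds H1 H2 H3.
  by rewrite /shl /shr /= addn0; split; [exact: h2|exact: h1].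
have [a' [Ea pa]] := std_ex ua ha.
have [b' [Eb pb]] := std_ex ub hb.
have [ta Ta] : exists ta, gen rm ll ta = a'.
  apply: IH => //.
  - by rewrite -(size_map (addn (shl rm ll (size a) (size b)))) -Ea; apply: ar1 Sz hn.
  - move=> H; apply: hav; rewrite Hs Ea; apply: pat_catl.
    by apply/pat_map => // *; apply: qof_add.
have [tb Tb] : exists tb, gen rm ll tb = b'.
  apply: IH => //.
  - by rewrite -(size_map (addn (shr rm ll (size a) (size b)))) -Eb; apply: ar2 Sz hn.
  - move=> H; apply: hav; rewrite Hs Eb; apply: pat_catr; apply: (@pat_catr [:: m]).
    by apply/pat_map => // *; apply: qof_add.
exists (Nd ta tb) => /=.
have -> : sz ta = size a by rewrite -(size_gen rm ll) Ta Ea size_map.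
have -> : sz tb = size b by rewrite -(size_gen rm ll) Tb Eb size_map.
rewrite Ta Tb -Ea -Eb Hs; congr (_ ++ _ :: _).
by rewrite /rt /m; case: (rm).
Qed.

Definition w n (pi : 'S_n) : seq nat := map (Defs.pval pi) (iota 0 n).

Lemma pvalE n (pi : 'S_n) (i : 'I_n) : Defs.pval pi i = pi i.
Proof. by rewrite /Defs.pval insubT // => h; congr (nat_of_ord (pi _)); apply: val_inj. Qed.

Lemma nth_w n (pi : 'S_n) j : nth 0 (w pi) j = Defs.pval pi j.
Proof.
rewrite /w; have [jn|jn] := ltnP j n.
  by rewrite (nth_map 0) ?size_iota // nth_iota.
by rewrite nth_default ?size_map ?size_iota // /Defs.pval insubF // ltnNge jn.
Qed.

Lemma size_w n (pi : 'S_n) : size (w pi) = n.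
Proof. by rewrite size_map size_iota. Qed.

Lemma w_perm n (pi : 'S_n) : perm_eq (w pi) (iota 0 n).
Proof.
apply: perm_sub; last by rewrite size_w.
- rewrite map_inj_in_uniq ?iota_uniq // => i j; rewrite !mem_iota /= => hi hj.
  rewrite (@pvalE n pi (Ordinal hi)) (@pvalE n pi (Ordinal hj)) => /val_inj /perm_inj.
  by case.
- move=> x /mapP [i]; rewrite mem_iota /= => hi ->.
  by rewrite (@pvalE n pi (Ordinal hi)) mem_iota /=.
Qed.

Lemma w_inj n : injective (@w n).
Proof.
move=> p1 p2 E; apply/permP => i; apply/val_inj.
by have := congr1 (fun s => nth 0 s (nat_of_ord i)) E; rewrite /= !nth_w !pvalE.
Qed.

Lemma w_ex n (s : seq nat) : perm_eq s (iota 0 n) -> exists pi : 'S_n, w pi = s.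
Proof.
move=> hp; have us : uniq s by rewrite (perm_uniq hp) iota_uniq.
have Ss : size s = n by rewrite (perm_size hp) size_iota.
have rs : forall i : 'I_n, nth 0 s i < n.
  move=> i; have : nth 0 s i \in s by apply: mem_nth; rewrite Ss.
  by rewrite (perm_mem hp) mem_iota.
pose f := fun i : 'I_n => Ordinal (rs i).
have fi : injective f.
  move=> i j /(congr1 val) /= E; apply: val_inj => /=.
  by move/eqP: E; rewrite nth_uniq ?Ss // => /eqP.
exists (perm fi); apply: (@eq_from_nth _ 0); rewrite ?size_w ?Ss // => i hi.
by rewrite nth_w (@pvalE n _ (Ordinal hi)) permE.
Qed.

Lemma w_distinct n (pi : 'S_n) i j : i < n -> j < n -> i != j ->
  nth 0 (w pi) i != nth 0 (w pi) j.
Proof.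
move=> hi hj; rewrite nth_uniq ?size_w //.
by rewrite (perm_uniq (w_perm pi)) iota_uniq.
Qed.

Definition cmp3 (p0 p1 p2 x y z : nat) :=
  [&& (x < y) == (p0 < p1), (x < z) == (p0 < p2) & (y < z) == (p1 < p2)].

Lemma swap_cmp x y p q : x != y -> p != q -> ((y < x) == (q < p)) = ((x < y) == (p < q)).
Proof.
move=> hxy hpq; case: (ltngtP x y) hxy => // _ _; case: (ltngtP p q) hpq => // _ _.
Qed.

Lemma cont3 n (pi : 'S_n) p0 p1 p2 : p0 != p1 -> p0 != p2 -> p1 != p2 ->
  contains pi [:: p0; p1; p2] <-> exists i j k, [/\ i < j, j < k, k < n &
    cmp3 p0 p1 p2 (nth 0 (w pi) i) (nth 0 (w pi) j) (nth 0 (w pi) k)].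
Proof.
move=> d01 d02 d12; split.
  case/existsP => f /forallP H.
  have H' := fun a b => forallP (H a) b.
  have h01 := H' (@Ordinal 3 0 isT) (@Ordinal 3 1 isT).
  have h02 := H' (@Ordinal 3 0 isT) (@Ordinal 3 2 isT).
  have h12 := H' (@Ordinal 3 1 isT) (@Ordinal 3 2 isT).
  move: h01 h02 h12 => /= /andP [l01 c01] /andP [l02 c02] /andP [l12 c12].
  exists (f (@Ordinal 3 0 isT)), (f (@Ordinal 3 1 isT)), (f (@Ordinal 3 2 isT)).
  by rewrite !nth_w !pvalE /cmp3 c01 c02 c12 l01 l12 ltn_ord.
case=> i [j [k [hij hjk hk hc]]].
have hj : j < n by apply: ltn_trans hk.
have hi : i < n by apply: ltn_trans hj.
pose f : {ffun 'I_3 -> 'I_n} := [ffun a : 'I_3 =>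
  match val a with 0 => Ordinal hi | 1 => Ordinal hj | _ => Ordinal hk end].
apply/existsP; exists f; apply/forallP => a; apply/forallP => b.
have dij : nth 0 (w pi) i != nth 0 (w pi) j by apply: w_distinct => //; lia.
have dik : nth 0 (w pi) i != nth 0 (w pi) k by apply: w_distinct => //; lia.
have djk : nth 0 (w pi) j != nth 0 (w pi) k by apply: w_distinct => //; lia.
move: hc; rewrite /cmp3 -!pvalE -!nth_w => /and3P [c01 c02 c12].
case: a => [[|[|[|a]]] ha] //; case: b => [[|[|[|b]]] hb] //; rewrite !ffunE /= ?ltnn ?eqxx //=;
  rewrite ?c01 ?c02 ?c12 ?hij ?hjk ?(ltn_trans hij hjk) //=.
all: try by rewrite swap_cmp.
Qed.

Definition pof (rm ll : bool) : seq nat :=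
  match rm, ll with
  | true, false => [:: 2; 1; 3]
  | true, true => [:: 3; 1; 2]
  | false, false => [:: 1; 3; 2]
  | false, true => [:: 2; 3; 1]
  end.

Lemma cont_key n (pi : 'S_n) rm ll p0 p1 p2 : pof rm ll = [:: p0; p1; p2] ->
  p0 != p1 -> p0 != p2 -> p1 != p2 ->
  (forall x y z, x != y -> x != z -> y != z -> cmp3 p0 p1 p2 x y z = qof rm ll x y z) ->
  contains pi (pof rm ll) <-> pat (w pi) (qof rm ll).
Proof.
move=> E d01 d02 d12 H; rewrite E cont3 //.
split; case=> i [j [k [a b c d]]]; exists i, j, k; rewrite ?size_w in c *;
  have hj : j < n by apply: ltn_trans c.
all: have hi : i < n by apply: ltn_trans hj.
all: rewrite H in d *; try split=> //; apply: w_distinct => //; lia.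
Qed.

Lemma cont_pat n (pi : 'S_n) rm ll : contains pi (pof rm ll) <-> pat (w pi) (qof rm ll).
Proof.
destruct rm, ll; apply: cont_key => // x y z hxy hxz hyz; rewrite /cmp3 /=;
  case: (ltngtP x y) hxy => // h1 _; case: (ltngtP x z) hxz => // h2 _; case: (ltngtP y z) hyz => // h3 _.
all: try lia.

Qed.

Lemma dl_pval n (p : 'S_n) j : j.+1 < n ->
  nth false (dl (w p)) j = (Defs.pval p j.+1 < Defs.pval p j).
Proof. by move=> h; rewrite dl_nth ?size_w // !nth_w. Qed.

Lemma desc_dl n (p1 p2 : 'S_n) : dl (w p1) = dl (w p2) -> descent_set p1 = descent_set p2.
Proof.
move=> E; rewrite /descent_set; apply: eq_in_filter => i; rewrite mem_iota => /andP [h1 h2].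
have h : (i.-1).+1 < n by lia.
by rewrite -(prednK h1) /= -!dl_pval // E.
Qed.

Lemma asc_pval n (p : 'S_n) j : j.+1 < n ->
  (Defs.pval p j < Defs.pval p j.+1) = ~~ nth false (dl (w p)) j.
Proof.
move=> h; rewrite dl_pval // -leqNgt ltn_neqAle andb_idl //.
by move=> _; rewrite -!nth_w; apply: w_distinct => //; lia.
Qed.

Lemma ballot_dl n (p1 p2 : 'S_n) : dl (w p1) = dl (w p2) -> ballot p1 = ballot p2.
Proof.
move=> E; apply: eq_forallb => m; congr (_ ==> _).
have hm : m <= n by rewrite -ltnS ltn_ord.
have D : forall p : 'S_n, des_prefix p m = count (fun j => nth false (dl (w p)) j) (iota 0 m.-1).
  move=> p; apply: eq_in_count => j; rewrite mem_iota => /andP [_ hj].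
  by rewrite dl_pval //; lia.
have A : forall p : 'S_n, asc_prefix p m = count (fun j => ~~ nth false (dl (w p)) j) (iota 0 m.-1).
  move=> p; apply: eq_in_count => j; rewrite mem_iota => /andP [_ hj].
  by rewrite asc_pval //; lia.
by rewrite !D !A E.
Qed.

Lemma av_pat n (pi : 'S_n) rm ll : (pi \in Av n (pof rm ll)) <-> ~ pat (w pi) (qof rm ll).
Proof.
rewrite inE /avoids; split.
  by move=> /negP H P; apply: H; apply/cont_pat.
by move=> H; apply/negP => /cont_pat.
Qed.

Definition treeOf (rm : bool) n (pi : 'S_n) : tree :=
  epsilon (inhabits Lf) (fun t => gen rm false t = w pi).
Definition phi (rm : bool) n (pi : 'S_n) : 'S_n :=
  epsilon (inhabits (1%g : 'S_n)) (fun s => w s = gen rm true (treeOf rm pi)).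

Lemma treeOfP rm n (pi : 'S_n) : pi \in Av n (pof rm false) ->
  gen rm false (treeOf rm pi) = w pi.
Proof.
move=> /av_pat H; apply: (epsilon_spec (inhabits Lf) (fun t => gen rm false t = w pi)).
apply: (@gen_ex rm false (size (w pi)).+1) => //.
by rewrite size_w; apply: w_perm.
Qed.

Lemma phiP rm n (pi : 'S_n) : pi \in Av n (pof rm false) ->
  w (phi rm pi) = gen rm true (treeOf rm pi).
Proof.
move=> H; apply: (epsilon_spec (inhabits (1%g : 'S_n))
   (fun s => w s = gen rm true (treeOf rm pi))).
apply: w_ex.
have E : sz (treeOf rm pi) = n.
  by rewrite -(size_gen rm false) treeOfP // size_w.
by have := gen_perm rm true (treeOf rm pi); rewrite E.
Qed.

Lemma phi_dl rm n (pi : 'S_n) : pi \in Av n (pof rm false) -> dl (w (phi rm pi)) = dl (w pi).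
Proof. by move=> H; rewrite phiP // -(treeOfP H) !dl_gen. Qed.

Lemma pair_ok rm n :
  (exists f : 'S_n -> 'S_n,
      bij_between f (Av n (pof rm false)) (Av n (pof rm true)) /\
      {in Av n (pof rm false), forall pi, descent_set (f pi) = descent_set pi}) /\
  #|Bal n (pof rm false)| = #|Bal n (pof rm true)|.
Proof.
have inA : {in Av n (pof rm false), forall pi, phi rm pi \in Av n (pof rm true)}.
  by move=> pi H; apply/av_pat; rewrite phiP //; apply: gen_avoid.
have injA : {in Av n (pof rm false) &, injective (phi rm (n:=n))}.
  move=> p1 p2 H1 H2 E; apply: w_inj; rewrite -(treeOfP H1) -(treeOfP H2).
  by congr (gen _ _ _); apply: (@gen_inj rm true); rewrite -!phiP // E.
have surA : {in Av n (pof rm true), forall tau, exists2 pi, pi \in Av n (pof rm false) & phi rm pi = tau}.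
  move=> tau /av_pat H.
  have [t Et] : exists t, gen rm true t = w tau.
    by apply: (@gen_ex rm true (size (w tau)).+1) => //; rewrite size_w; apply: w_perm.
  have St : sz t = n by rewrite -(size_gen rm true) Et size_w.
  have [pi Epi] : exists pi : 'S_n, w pi = gen rm false t.
    by apply: w_ex; rewrite -St; apply: gen_perm.
  have Api : pi \in Av n (pof rm false) by apply/av_pat; rewrite Epi; apply: gen_avoid.
  exists pi => //; apply: w_inj; rewrite phiP // -Et; congr (gen _ _ _).
  by apply: (@gen_inj rm false); rewrite treeOfP.
split.
  exists (phi rm (n:=n)); split; first by split.
  by move=> pi H; apply: desc_dl; apply: phi_dl.
have -> : Bal n (pof rm true) = (@phi rm n) @: Bal n (pof rm false).
  apply/setP => tau; apply/idP/imsetP.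
    rewrite inE => /andP [Ht Bt]; have [pi Api Ept] := surA _ Ht.
    exists pi => //; rewrite inE Api /=.
    by rewrite -Ept (ballot_dl (phi_dl Api)) in Bt.
  case=> pi; rewrite inE => /andP [Api Bpi] ->.
  by rewrite inE inA //= (ballot_dl (phi_dl Api)).
rewrite card_in_imset // => p1 p2; rewrite [p1 \in _]inE [p2 \in _]inE => /andP [h1 _] /andP [h2 _].
exact: injA h1 h2.
Qed.

Unset Implicit Arguments.

Theorem mainTheorem18 :
  forall n : nat, 1 <= n ->
    (exists phi : 'S_n -> 'S_n,
        bij_between phi (Av n [:: 2; 1; 3]) (Av n [:: 3; 1; 2]) /\
        {in Av n [:: 2; 1; 3], forall pi, descent_set (phi pi) = descent_set pi}) /\
    (exists eta : 'S_n -> 'S_n,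
        bij_between eta (Av n [:: 1; 3; 2]) (Av n [:: 2; 3; 1]) /\
        {in Av n [:: 1; 3; 2], forall pi, descent_set (eta pi) = descent_set pi}) /\
    #|Bal n [:: 2; 1; 3]| = #|Bal n [:: 3; 1; 2]| /\
    #|Bal n [:: 1; 3; 2]| = #|Bal n [:: 2; 3; 1]|.
Proof.
move=> n _.
have [A1 C1] := pair_ok true n.
have [A2 C2] := pair_ok false n.
by split; [exact: A1 | split; [exact: A2 | split; [exact: C1 | exact: C2]]].
Qed.
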